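(* Let $\mathcal{C},\mathcal{D}$ be simplicial models with facets $F$ of $\mathcal{C}$ and $G$ of $\mathcal{D}$, and let $\mathcal{M},\mathcal{N}$ be local epistemic models with worlds $w$ of $\mathcal{M}$ and $v$ of $\mathcal{N}$. Then $\mathcal{C},F$ and $\mathcal{D},G$ are bisimilar iff $\mathtt{LEM}(\mathcal{C}),F$ and $\mathtt{LEM}(\mathcal{D}),G$ are bisimilar; and $\mathcal{M},w$ and $\mathcal{N},v$ are bisimilar iff $\mathtt{SC}(\mathcal{M}),F^{\mathcal M}_w$ and $\mathtt{SC}(\mathcal{N}),F^{\mathcal N}_v$ are bisimilar.
   Context: Fix a nonempty finite set $\mathbf{A}$ of agents and a countable set $\mathbf{P}$ of predicate letters. A simplicial model is $\mathcal{C}=(\mathcal{V},C,\chi,\ell)$: $\mathcal{V}\neq\emptyset$; $C\subseteq\wp(\mathcal{V})$ with $\emptyset\notin C$, closed under nonempty subsets, containing all singletons; $\chi:\mathcal{V}\to\mathbf{A}$ injective on every member of $C$; $\ell:\mathbf{P}\to\wp(\mathcal{V})$; facets $\mathcal{F}(C)$ are the inclusion-maximal members of $C$. A first-order Kripke model is $\mathcal{M}=(W,\delta,\{R_a\}_{a\in\mathbf{A}},\rho)$: $W\neq\emptyset$, $\delta:W\to\wp(\mathbf{A})\setminus\{\emptyset\}$, $R_a\subseteq W\times W$ with $R_a(w)=\emptyset$ if $a\notin\delta(w)$, $\rho:\mathbf{P}\times W\to\wp(\mathbf{A})$ with $\rho(p,w)\subseteq\delta(w)$. $\mathcal{M}$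 is a local epistemic model if: for each $a$ the restriction of $R_a$ to $\{w\mid a\in\delta(w)\}$ is an equivalence relation; $wR_av$ and $a\in\delta(w)$ imply $a\in\delta(v)$; $wR_av$ and $a\in\rho(p,w)$ imply $a\in\rho(p,v)$; $v\in\bigcap_{a\in\delta(w)}R_a(w)$ implies $\delta(v)\subseteq\delta(w)$. $\mathtt{LEM}(\mathcal{C})$ has worlds $\mathcal{F}(C)$, $\delta(F)=\chi[F]$, $R_a=\{(F,G)\mid a\in\chi[F\cap G]\}$, $\rho(p,F)=\chi[F\cap\ell(p)]$. For a local epistemic model $\mathcal{M}$, let $[w]_a=R_a(w)$ and $F^{\mathcal M}_w=\{(a,[w]_a)\mid a\in\delta(w)\}$; $\mathtt{SC}(\mathcal{M})$ has vertices $\{(a,[w]_a)\mid w\in W,a\in\delta(w)\}$, faces the nonempty subsets of the sets $F^{\mathcal M}_w$ ($w\in W$), coloring $(a,[w]_a)\mapsto a$, labeling $\ell(p)=\{(a,[w]_a)\mid a\in\rho(p,w)\}$. Bisimulation between simplicial models $\mathcal{C},\mathcal{D}$: $Z\subseteq\mathcal{F}(C^{\mathcal C})\times\mathcal{F}(C^{\mathcal D})$ such that for $(F,G)\in Z$: (Inv) $\chi^{\mathcal C}[F]=\chi^{\mathcal D}[G]$ and $\chi^{\mathcal C}[F\cap\ell^{\mathcal C}(p)]=\chi^{\mathcal D}[G\cap\ell^{\mathcal D}(p)]$ for all $p$; (Zig) for all $A\subseteq\mathbf{A}$ and facets $F'$ with $A\subseteq\chi^{\mathcal C}[F\cap F']$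 there is a facet $G'$ with $A\subseteq\chi^{\mathcal D}[G\cap G']$ and $(F',G')\in Z$; (Zag) symmetric. Bisimulation between Kripke models $\mathcal{M},\mathcal{N}$: $Z\subseteq W^{\mathcal M}\times W^{\mathcal N}$ such that for $(w,v)\in Z$: (Inv) $\delta^{\mathcal M}(w)=\delta^{\mathcal N}(v)$ and $\rho^{\mathcal M}(p,w)=\rho^{\mathcal N}(p,v)$ for all $p$; (Zig) for all $A\subseteq\mathbf{A}$ and $w'\in\bigcap_{a\in A}R^{\mathcal M}_a(w)$ there is $v'\in\bigcap_{a\in A}R^{\mathcal N}_a(v)$ with $(w',v')\in Z$; (Zag) symmetric (the empty intersection is the whole set of worlds). Pointed models are bisimilar if some bisimulation relates the points. *)

(* Defs.v *)
From mathcomp Require Import ssreflect ssrfun ssrbool eqtype ssrnat choice fintype.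
Set Implicit Arguments. Unset Strict Implicit. Unset Printing Implicit Defensive.

(* Sets are represented as predicates (X : T -> Prop); equality of sets of
   agents in the (Inv) clauses is extensional (pointwise <->). *)

Section Models.
Variables (Ag : finType) (P : countType).

Record smodel := SModel {
  sV : Type;
  sC : (sV -> Prop) -> Prop;
  schi : sV -> Ag;
  sell : P -> sV -> Prop
}.
Arguments sC : clear implicits. Arguments schi : clear implicits.
Arguments sell : clear implicits.

Definition is_smodel (C : smodel) : Prop :=
  inhabited (sV C) /\
  (forall X, sC C X -> exists x, X x) /\
  (forall X Y, sC C X -> (forall x, Y x -> X x) -> (exists y, Y y) -> sC C Y) /\
  (forall x : sV C, sC C (fun y => y = x)) /\
  (forall X, sC C X -> forall x y, X x -> X y -> schi C x = schi C y -> x = y).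

Definition is_facet (C : smodel) (F : sV C -> Prop) : Prop :=
  sC C F /\ forall G, sC C G -> (forall x, F x -> G x) -> forall x, G x -> F x.

Definition facet (C : smodel) := {F : sV C -> Prop | is_facet F}.

Definition chimg (C : smodel) (X : sV C -> Prop) : Ag -> Prop :=
  fun a => exists x, X x /\ schi C x = a.

Definition inter T (X Y : T -> Prop) : T -> Prop := fun x => X x /\ Y x.

Definition sbisim (C D : smodel) (Z : facet C -> facet D -> Prop) : Prop :=
  forall (F : facet C) (G : facet D), Z F G ->
  ((forall a, chimg (sval F) a <-> chimg (sval G) a) /\
   (forall p a, chimg (inter (sval F) (sell C p)) a <->
                chimg (inter (sval G) (sell D p)) a)) /\
  (forall (B : Ag -> Prop) (F' : facet C),
     (forall a, B a -> chimg (inter (sval F) (sval F')) a) ->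
     exists G' : facet D,
       (forall a, B a -> chimg (inter (sval G) (sval G')) a) /\ Z F' G') /\
  (forall (B : Ag -> Prop) (G' : facet D),
     (forall a, B a -> chimg (inter (sval G) (sval G')) a) ->
     exists F' : facet C,
       (forall a, B a -> chimg (inter (sval F) (sval F')) a) /\ Z F' G').

Definition sbisimilar (C D : smodel) (F : facet C) (G : facet D) : Prop :=
  exists Z, sbisim Z /\ Z F G.

Record kmodel := KModel {
  kW : Type;
  kdelta : kW -> Ag -> Prop;
  kR : Ag -> kW -> kW -> Prop;
  krho : P -> kW -> Ag -> Prop
}.
Arguments kdelta : clear implicits. Arguments kR : clear implicits.
Arguments krho : clear implicits.

Definition is_kmodel (M : kmodel) : Prop :=
  inhabited (kW M) /\
  (forall w, exists a, kdelta M w a) /\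
  (forall a w v, kR M a w v -> kdelta M w a) /\
  (forall p w a, krho M p w a -> kdelta M w a).

Definition is_local_epistemic (M : kmodel) : Prop :=
  is_kmodel M /\
  (forall a,
     (forall w, kdelta M w a -> kR M a w w) /\
     (forall w v, kdelta M w a -> kdelta M v a -> kR M a w v -> kR M a v w) /\
     (forall w v u, kdelta M w a -> kdelta M v a -> kdelta M u a ->
                    kR M a w v -> kR M a v u -> kR M a w u)) /\
  (forall a w v, kR M a w v -> kdelta M w a -> kdelta M v a) /\
  (forall a p w v, kR M a w v -> krho M p w a -> krho M p v a) /\
  (forall w v, (forall a, kdelta M w a -> kR M a w v) ->
               forall a, kdelta M v a -> kdelta M w a).

Definition kbisim (M N : kmodel) (Z : kW M -> kW N -> Prop) : Prop :=
  forall w v, Z w v ->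
  ((forall a, kdelta M w a <-> kdelta N v a) /\
   (forall p a, krho M p w a <-> krho N p v a)) /\
  (forall (B : Ag -> Prop) (w' : kW M), (forall a, B a -> kR M a w w') ->
     exists v' : kW N, (forall a, B a -> kR N a v v') /\ Z w' v') /\
  (forall (B : Ag -> Prop) (v' : kW N), (forall a, B a -> kR N a v v') ->
     exists w' : kW M, (forall a, B a -> kR M a w w') /\ Z w' v').

Definition kbisimilar (M N : kmodel) (w : kW M) (v : kW N) : Prop :=
  exists Z, kbisim Z /\ Z w v.

Definition LEM (C : smodel) : kmodel :=
  @KModel (facet C)
    (fun F => chimg (sval F))
    (fun a F G => chimg (inter (sval F) (sval G)) a)
    (fun p F => chimg (inter (sval F) (sell C p))).

(* vertices (a, [w]_a) with a ∈ δ(w), where [w]_a = R_a(w) as a set of worlds *)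
Definition SCvert (M : kmodel) :=
  {x : Ag * (kW M -> Prop) | exists w, kdelta M w x.1 /\ x.2 = kR M x.1 w}.

Definition Fw (M : kmodel) (w : kW M) : SCvert M -> Prop :=
  fun x => kdelta M w (sval x).1 /\ (sval x).2 = kR M (sval x).1 w.

Definition SC (M : kmodel) : smodel :=
  @SModel (SCvert M)
    (fun X => (exists x, X x) /\ exists w, forall x, X x -> Fw w x)
    (fun x => (sval x).1)
    (fun p x => exists w, krho M p w (sval x).1 /\ (sval x).2 = kR M (sval x).1 w).

End Models.

(* Main.v *)
Require Import Defs.
From mathcomp Require Import ssreflect ssrfun ssrbool eqtype ssrnat choice fintype.
From Stdlib Require Import FunctionalExtensionality PropExtensionality.
Set Implicit Arguments. Unset Strict Implicit.
Arguments kR {Ag P}. Arguments kdelta {Ag P}. Arguments krho {Ag P}. Arguments sell {Ag P}. Arguments schi {Ag P}. Arguments sC {Ag P}.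

Lemma chimg_ext (Ag : finType) (P : countType) (C : smodel Ag P) (X Y : sV C -> Prop) :
  (forall x, X x <-> Y x) -> forall a, chimg X a <-> chimg Y a.
Proof.
move=> H a; split=> [[x [Hx Ha]]|[x [Hx Ha]]]; exists x; split=> //; by apply/H.
Qed.

Lemma inter_ext T (X X' Y Y' : T -> Prop) :
  (forall x, X x <-> X' x) -> (forall x, Y x <-> Y' x) ->
  forall x, inter X Y x <-> inter X' Y' x.
Proof. move=> H1 H2 x; rewrite /inter H1 H2; tauto. Qed.

Section LE.
Variables (Ag : finType) (P : countType) (M : kmodel Ag P).
Hypothesis HM : is_local_epistemic M.

Lemma R_dom a w u : kR M a w u -> kdelta M w a /\ kdelta M u a.
Proof.
case: HM => [[_ [_ [HRd _]]] [_ [Hmono _]]] H.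
split; [exact: HRd H| exact: Hmono H (HRd _ _ _ H)].
Qed.

Lemma R_eq a w w' : kR M a w w' -> kR M a w = kR M a w'.
Proof.
move=> H; have [dw dw'] := R_dom H.
case: HM => _ [Heq _]; case: (Heq a) => [Hrefl [Hsym Htrans]].
apply: functional_extensionality => u; apply: propositional_extensionality.
split=> Hu.
- have [_ du] := R_dom Hu.
  exact: (Htrans w' w u dw' dw du (Hsym _ _ dw dw' H) Hu).
- have [_ du] := R_dom Hu.
  exact: (Htrans w w' u dw dw' du H Hu).
Qed.

Definition mkv (a : Ag) (w : kW M) (H : kdelta M w a) : SCvert M :=
  exist _ (a, kR M a w) (ex_intro _ w (conj H erefl)).

Lemma Fw_mkv a w H : Fw w (@mkv a w H).
Proof. by split. Qed.

Lemma Fw_sub (w w' : kW M) : (forall x, Fw w x -> Fw w' x) -> forall x, Fw w' x -> Fw w x.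
Proof.
move=> Hs [[b S] Hx] [/= db eS].
case: HM => [[_ [_ [HRd _]]] [Heq [_ [_ Hloc]]]].
have key : forall a, kdelta M w a -> kdelta M w' a /\ kR M a w = kR M a w'.
  move=> a da; have := Hs (mkv da) (Fw_mkv da); case=> /= da' e; by split.
have dwb : kdelta M w b.
  apply: (Hloc w w') => // a da.
  have [da' e] := key a da; rewrite e; by case: (Heq a) => Hr _; apply: Hr.
split=> //=. rewrite eS; have [_ e] := key b dwb; by rewrite e.
Qed.

Lemma L_facet (w : kW M) : is_facet (C := SC M) (Fw w).
Proof.
case: HM => [[_ [Hne _]] _]; case: (Hne w) => a da.
split; first by split; [exists (mkv da); exact: Fw_mkv | exists w].
move=> G [_ [w' Hw']] Hsub x Gx.
apply: (@Fw_sub w w'); last exact: Hw'.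
move=> y /Hsub; exact: Hw'.
Qed.

Lemma L_facet_char (X : facet (SC M)) : exists w, forall x, sval X x <-> Fw w x.
Proof.
case: X => X [[_ [w Hw]] Hmax] /=; exists w => x; split; first exact: Hw.
apply: Hmax => //; split; last by exists w.
case: HM => [[_ [Hne _]] _]; case: (Hne w) => a da; exists (mkv da); exact: Fw_mkv.
Qed.

Lemma L_chimg (w : kW M) a : chimg (C := SC M) (Fw w) a <-> kdelta M w a.
Proof.
split; first by move=> [x [[dx _] <-]].
move=> da; exists (mkv da); split=> //; exact: Fw_mkv.
Qed.

Lemma L_rho (w : kW M) p a : chimg (C := SC M) (inter (Fw w) (sell (SC M) p)) a <-> krho M p w a.
Proof.
split.
- move=> [[[b S] Hx] [[[/= db eS] [u [/= ru eu]]] /= Eb]]; subst b.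
  case: HM => [_ [Heq [_ [Hrho _]]]].
  apply: (Hrho a p u w _ ru).
  rewrite -eu eS; by case: (Heq a) => Hr _; apply: Hr.
- move=> r; case: HM => [[_ [_ [_ Hrd]]] _].
  have da := Hrd _ _ _ r.
  exists (mkv da); split=> //; split; first exact: Fw_mkv.
  by exists w.
Qed.

Lemma L_R (w w' : kW M) a : chimg (C := SC M) (inter (Fw w) (Fw w')) a <-> kR M a w w'.
Proof.
split.
- move=> [[[b S] Hx] [[[/= db eS] [/= db' eS']] /= Eb]]; subst b.
  case: HM => [_ [Heq _]].
  rewrite -eS eS'; by case: (Heq a) => Hr _; apply: Hr.
- move=> H; have [dw dw'] := R_dom H.
  exists (mkv dw); split=> //; split; first exact: Fw_mkv.
  by split=> //=; apply: R_eq.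
Qed.

End LE.

Theorem proposition4 (Ag : finType) (P : countType) (hAg : 0 < #|Ag|) :
  (forall (C D : smodel Ag P), is_smodel C -> is_smodel D ->
     forall (F : facet C) (G : facet D),
       sbisimilar F G <-> kbisimilar (M := LEM C) (N := LEM D) F G) /\
  (forall (M N : kmodel Ag P), is_local_epistemic M -> is_local_epistemic N ->
     forall (w : kW M) (v : kW N),
       kbisimilar w v <->
       exists (HF : is_facet (C := SC M) (Fw w)) (HG : is_facet (C := SC N) (Fw v)),
         sbisimilar (C := SC M) (D := SC N) (exist _ (Fw w) HF) (exist _ (Fw v) HG)).
Proof.
split; first by move=> C D _ _ F G; split.
move=> M N HM HN w v; split.
- move=> [Z [HZ Zwv]].
  exists (L_facet HM w), (L_facet HN v).
  exists (fun (X : facet (SC M)) (Y : facet (SC N)) => exists w v, Z w v /\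
            (forall x, sval X x <-> Fw w x) /\ (forall y, sval Y y <-> Fw v y)).
  split; last by exists w, v.
  move=> X Y [w1 [v1 [Z1 [EX EY]]]].
  have [[Hd Hr] [Hzig Hzag]] := HZ _ _ Z1.
  split; [split|split].
  + move=> a; rewrite (chimg_ext EX) (chimg_ext EY) L_chimg // L_chimg //.
  + move=> p a.
    rewrite (chimg_ext (inter_ext EX (fun _ => iff_refl _))).
    rewrite (chimg_ext (inter_ext EY (fun _ => iff_refl _))).
    rewrite L_rho // L_rho //.
  + move=> B X' HB; have [w' Ew'] := L_facet_char HM X'.
    have [v' [Hv' Zv']] : exists v' : kW N, (forall a, B a -> kR N a v1 v') /\ Z w' v'.
      apply: Hzig => a /HB.
      by rewrite (chimg_ext (inter_ext EX Ew')) L_R.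
    exists (exist _ (Fw v') (L_facet HN v')); split.
    * move=> a /Hv'; by rewrite (chimg_ext (inter_ext EY (fun _ => iff_refl _))) L_R.
    * by exists w', v'.
  + move=> B Y' HB; have [v' Ev'] := L_facet_char HN Y'.
    have [w' [Hw' Zw']] : exists w' : kW M, (forall a, B a -> kR M a w1 w') /\ Z w' v'.
      apply: Hzag => a /HB.
      by rewrite (chimg_ext (inter_ext EY Ev')) L_R.
    exists (exist _ (Fw w') (L_facet HM w')); split.
    * move=> a /Hw'; by rewrite (chimg_ext (inter_ext EX (fun _ => iff_refl _))) L_R.
    * by exists w', v'.
- move=> [HF [HG [Z' [HZ Z'wv]]]].
  exists (fun w v => exists X Y, Z' X Y /\
            (forall x, sval X x <-> Fw w x) /\ (forall y, sval Y y <-> Fw v y)).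
  split; last by exists (exist _ (Fw w) HF), (exist _ (Fw v) HG).
  move=> w1 v1 [X [Y [Z1 [EX EY]]]].
  have [[Hd Hr] [Hzig Hzag]] := HZ _ _ Z1.
  split; [split|split].
  + move=> a; rewrite -L_chimg // -[kdelta N v1 a]L_chimg //.
    by rewrite -(chimg_ext EX) -(chimg_ext EY).
  + move=> p a; rewrite -L_rho // -[krho N p v1 a]L_rho //.
    rewrite -(chimg_ext (inter_ext EX (fun _ => iff_refl _))).
    by rewrite -(chimg_ext (inter_ext EY (fun _ => iff_refl _))).
  + move=> B w' HB.
    have [Y' [HY' ZY']] := Hzig B (exist _ (Fw w') (L_facet HM w')) (fun a Ba =>
       proj2 (chimg_ext (inter_ext EX (fun _ => iff_refl _)) a)
             (proj2 (L_R HM w1 w' a) (HB a Ba))).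
    have [v' Ev'] := L_facet_char HN Y'.
    exists v'; split.
    * move=> a /HY'; by rewrite (chimg_ext (inter_ext EY Ev')) L_R.
    * exists (exist _ (Fw w') (L_facet HM w')), Y'; split=> //; split=> //.
  + move=> B v' HB.
    have [X' [HX' ZX']] := Hzag B (exist _ (Fw v') (L_facet HN v')) (fun a Ba =>
       proj2 (chimg_ext (inter_ext EY (fun _ => iff_refl _)) a)
             (proj2 (L_R HN v1 v' a) (HB a Ba))).
    have [w' Ew'] := L_facet_char HM X'.
    exists w'; split.
    * move=> a /HX'; by rewrite (chimg_ext (inter_ext EX Ew')) L_R.
    * exists X', (exist _ (Fw v') (L_facet HN v')); split=> //; split=> //.
Qed.
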